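(* Let $d\ge3$ and let $T$ be the infinite $d$-regular tree with origin $o$. Index rotor directions as follows: at each vertex $v\neq o$ the neighbors of $v$ are labeled $1,\dots,d$ with label $d$ assigned to the parent of $v$ (its neighbor closer to $o$), and at $o$ the $d$ neighbors are labeled $1,\dots,d$ arbitrarily; a rotor pointing in direction $i$ advances to direction $i+1$ (with $d+1$ read as $1$). If initially every rotor points in direction $d-1$, then every chip in an infinite succession of chips started at $o$ (each performing rotor-router walk until it returns to $o$, rotors not reset) returns to $o$ in finitely many steps.
   Context: Rotor-router walk: a chip at vertex $v$ first advances the rotor at $v$ to the next direction and then moves to the neighbor in that direction. *)

(* Defs.v *)
From mathcomp Require Import all_boot.
Set Implicit Arguments. Unset Strict Implicit. Unset Printing Implicit Defensive.

(* Rotor directions are encoded 0-indexed: label i (1 <= i <= d) is the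
   natural number i-1 < d.  A vertex is the sequence of (0-indexed) labels
   followed from the origin o = [::]:
   - at o, the neighbour in direction i is [:: i];
   - at v <> o, direction d-1 (label d) is the parent (v with its last entry
     removed), and direction i < d-1 is the child rcons v i.
   Every labelling as in the paper is isomorphic to this one. *)

Definition vertex := seq nat.
Definition origin : vertex := [::].

Definition nbr (d : nat) (v : vertex) (i : nat) : vertex :=
  match v with
  | [::] => [:: i]
  | x :: s => if i == d.-1 then belast x s else rcons v i
  end.

Definition config := ((vertex -> nat) * vertex)%type.

Definition step (d : nat) (c : config) : config :=
  let: (rho, v) := c in
  let r := (rho v).+1 %% d in
  ((fun w => if w == v then r else rho w), nbr d v r).

Definition init (d : nat) : config := (fun _ => d - 2, origin).

(* Rotors are never reset and each chip starts at o where the previous one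
   stopped, so the successive chips together perform one rotor walk from o. *)
Definition walk (d : nat) (n : nat) : config := iter n (step d) (init d).

Definition returns_upto (d n : nat) : nat :=
  count (fun t => (walk d t).2 == origin) (iota 1 n).

(* Main.v *)
Require Import Defs.
From mathcomp Require Import all_boot.

Fixpoint St (n : nat) (rho : vertex -> nat) (v : vertex) (m : nat) : Prop :=
  match m with
  | 0 => forall s, rho (v ++ s) = n.+1
  | m'.+1 => rho v = n.+2 /\ forall i, i < n.+2 -> St n rho (rcons v i) m'
  end.

Lemma St_local n m : forall rho rho' v, St n rho v m ->
  (forall s, rho' (v ++ s) = rho (v ++ s)) -> St n rho' v m.
Proof.
elim: m => [|m IH] rho rho' v /= H E.
- by move=> s; rewrite E H.
- case: H => H1 H2; split; first by have := E [::]; rewrite cats0 => ->.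
  move=> i Hi; apply: (IH rho); first exact: H2.
  by move=> s; rewrite cat_rcons E.
Qed.

Arguments St_local {n m rho rho' v}.

Lemma cat_cons_inj (v s s' : vertex) i j : v ++ i :: s = v ++ j :: s' -> i = j.
Proof. elim: v => [|x v IH] /=; [by case | by case=> /IH]. Qed.

Lemma cat_cons_neq (v s : vertex) i : v <> v ++ i :: s.
Proof. by elim: v => [|x v IH] //= [] /IH. Qed.
Arguments cat_cons_neq {v s i}.
Arguments cat_cons_inj {v s s' i j}.

Lemma out_child (v w : vertex) j : (forall s, w <> v ++ s) -> forall s, w <> rcons v j ++ s.
Proof. by move=> H s; rewrite cat_rcons; apply: H. Qed.

Lemma nbr_par n p a : nbr n.+3 (rcons p a) n.+2 = p.
Proof. by case: p => [|y q] /=; rewrite eqxx // belast_rcons. Qed.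

Lemma nbr_child n p a i : i < n.+2 -> nbr n.+3 (rcons p a) i = rcons (rcons p a) i.
Proof. by case: p => [|y q] /= Hi; rewrite ltn_eqF. Qed.

Lemma step_eq d rho v : step d (rho, v) =
  ((fun w => if w == v then (rho v).+1 %% d else rho w), nbr d v ((rho v).+1 %% d)).
Proof. by []. Qed.

Lemma excursion n m : forall p a rho, St n rho (rcons p a) m ->
  exists t rho', iter t (step n.+3) (rho, rcons p a) = (rho', p) /\
    St n rho' (rcons p a) m.+1 /\
    (forall w, (forall s, w <> rcons p a ++ s) -> rho' w = rho w).
Proof.
elim: m => [|m IH] p a rho /= H.
- have Hv : rho (rcons p a) = n.+1 by rewrite -[rcons p a]cats0 H.
  exists 1; eexists; split; first by rewrite iterS [iter 0 _ _]/= step_eq Hv modn_small // nbr_par.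
  split; first split.
  + by rewrite eqxx.
  + move=> i Hi s; rewrite cat_rcons; case: eqP => [E|_]; last exact: H.
    by case: (cat_cons_neq (esym E)).
  + move=> w Hw; case: eqP => // E; case: (Hw [::]); by rewrite cats0.
- set v := rcons p a in H *.
  case: H => Hv Hc.
  have common : forall j rho1, j < n.+2 -> rho1 v = j ->
      St n rho1 (rcons v j) m ->
      exists t1 rho3, iter t1.+1 (step n.+3) (rho1, rcons v j) = (rho3, nbr n.+3 v j.+1)
        /\ rho3 v = j.+1 /\ St n rho3 (rcons v j) m.+1
        /\ (forall i k, i != j -> St n rho1 (rcons v i) k -> St n rho3 (rcons v i) k)
        /\ (forall w, (forall s, w <> v ++ s) -> rho3 w = rho1 w).
  { move=> j rho1 Hj Hr1 Hs.
    have [t1 [rho2 [E2 [S2 O2]]]] := IH v j rho1 Hs.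
    have Hv2 : rho2 v = j.
      by rewrite O2 // => s; rewrite cat_rcons; apply: cat_cons_neq.
    exists t1; eexists; split; first by rewrite iterS E2 step_eq Hv2 modn_small.
    split; first by rewrite eqxx.
    split.
    { apply: (St_local S2) => s; rewrite cat_rcons; case: eqP => // E.
      by case: (cat_cons_neq (esym E)). }
    split.
    { move=> i k Hij Si; apply: (St_local Si) => s; rewrite cat_rcons.
      case: eqP => [E|_]; first by case: (cat_cons_neq (esym E)).
      rewrite O2 // => s'; rewrite cat_rcons => /cat_cons_inj E; by rewrite E eqxx in Hij. }
    move=> w Hw; case: eqP => [E|_]; first by case: (Hw [::]); rewrite cats0.
    by apply: O2; apply: out_child. }
  have inner : forall k j rho1, j + k = n.+1 -> rho1 v = j ->
      (forall i, i < j -> St n rho1 (rcons v i) m.+1) ->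
      (forall i, j <= i -> i < n.+2 -> St n rho1 (rcons v i) m) ->
      (forall w, (forall s, w <> v ++ s) -> rho1 w = rho w) ->
      exists t rho', iter t (step n.+3) (rho1, rcons v j) = (rho', p) /\
        St n rho' v m.+2 /\ (forall w, (forall s, w <> v ++ s) -> rho' w = rho w).
  { elim=> [|k IHk] j rho1 Hjk Hr1 Hlo Hhi Ho.
    - rewrite addn0 in Hjk; move: Hr1 Hlo Hhi; rewrite Hjk => Hr1 Hlo Hhi.
      have [t1 [rho3 [E3 [R3 [S3 [K3 O3]]]]]] := common n.+1 rho1 (ltnSn _) Hr1 (Hhi _ (leqnn _) (ltnSn _)).
      exists t1.+1, rho3; split; first by rewrite E3 nbr_par.
      split; last by move=> w Hw; rewrite O3 // Ho.
      split => // i Hi; case: (ltngtP i n.+1) => Hin.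
      + by apply: K3; [rewrite ltn_eqF | apply: Hlo].
      + by move: Hi; rewrite ltnS leqNgt Hin.
      + by rewrite Hin.
    - have Hj : j < n.+1 by rewrite -Hjk addnS ltnS leq_addr.
      have [t1 [rho3 [E3 [R3 [S3 [K3 O3]]]]]] := common j rho1 (leq_trans Hj (leqnSn _)) Hr1 (Hhi _ (leqnn _) (leq_trans Hj (leqnSn _))).
      have L1 : forall i, i < j.+1 -> St n rho3 (rcons v i) m.+1.
      { move=> i Hi; case: (ltngtP i j) => Hij.
        * by apply: K3; [rewrite ltn_eqF | apply: Hlo].
        * by move: Hi; rewrite ltnS leqNgt Hij.
        * by rewrite Hij. }
      have L2 : forall i, j.+1 <= i -> i < n.+2 -> St n rho3 (rcons v i) m.
      { move=> i Hi1 Hi2.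
        by apply: K3; [rewrite gtn_eqF | apply: Hhi => //; apply: ltnW]. }
      have L3 : forall w, (forall s, w <> v ++ s) -> rho3 w = rho w.
      { by move=> w Hw; rewrite O3 // Ho. }
      have Hjk' : j.+1 + k = n.+1 by rewrite addSnnS.
      have [t2 [rho' [E' [S' O']]]] := IHk j.+1 rho3 Hjk' R3 L1 L2 L3.
      exists (t2 + t1.+1), rho'; split; first by rewrite iterD E3 nbr_child.
      by split. }
  set rho1 := fun w => if w == v then 0 else rho w.
  have M1 : rho1 v = 0 by rewrite /rho1 eqxx.
  have M2 : forall i, i < 0 -> St n rho1 (rcons v i) m.+1 by [].
  have M3 : forall i, 0 <= i -> i < n.+2 -> St n rho1 (rcons v i) m.
  { move=> i _ Hi; apply: (St_local (Hc i Hi)) => s; rewrite /rho1 cat_rcons.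
    case: eqP => // E; by case: (cat_cons_neq (esym E)). }
  have M4 : forall w, (forall s, w <> v ++ s) -> rho1 w = rho w.
  { move=> w Hw; rewrite /rho1; case: eqP => // E; by case: (Hw [::]); rewrite cats0. }
  have [t [rho' [E' [S' O']]]] := inner n.+1 0 rho1 erefl M1 M2 M3 M4.
  exists (t + 1), rho'; split; last by [].
  by rewrite iterD iterS [iter 0 _ _]/= step_eq Hv modnn nbr_child.
Qed.

Definition Good n (rho : vertex -> nat) := forall i, i < n.+3 -> exists m, St n rho [:: i] m.

Lemma origin_return n rho : Good n rho ->
  exists t rho', iter t.+1 (step n.+3) (rho, [::]) = (rho', [::]) /\ Good n rho'.
Proof.
move=> G.
set r := (rho [::]).+1 %% n.+3.
have Hr : r < n.+3 by apply: ltn_pmod.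
set rho1 := fun w => if w == [::] then r else rho w.
have [m Sm] := G r Hr.
have S1 : St n rho1 (rcons [::] r) m.
  by apply: (St_local Sm) => s; rewrite /rho1.
have [t [rho' [E' [S' O']]]] := excursion n m [::] r rho1 S1.
exists t, rho'; split; first by rewrite iterSr step_eq.
move=> i Hi; case: (eqVneq i r) => [->|Hir]; first by exists m.+1.
have [mi Si] := G i Hi; exists mi; apply: (St_local Si) => s.
rewrite O' /=; last by move=> s' [] /esym E; rewrite E eqxx in Hir.
by rewrite /rho1.
Qed.

Lemma returns_S d N : returns_upto d N.+1 = returns_upto d N + ((walk d N.+1).2 == origin).
Proof. rewrite /returns_upto (_ : iota 1 N.+1 = iota 1 (N + 1)); last by rewrite addn1. by rewrite iotaD count_cat /= add0n addn0. Qed.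

Lemma returns_mono d N t : returns_upto d N <= returns_upto d (t + N).
Proof.
elim: t => // t IH; rewrite addSn returns_S; exact: leq_trans IH (leq_addr _ _).
Qed.

Theorem mainTheorem10 (d : nat) (hd : 3 <= d) :
  forall k : nat, exists n : nat, k < returns_upto d n.
Proof.
case: d hd => [|[|[|n]]] // _.
have P : forall k, exists N rho, walk n.+3 N = (rho, [::]) /\ Good n rho /\ k <= returns_upto n.+3 N.
{ elim=> [|k [N [rho [E [G L]]]]].
  - exists 0, (fun _ => n.+1); split; first by [].
    by split => // i _; exists 0.
  - have [t [rho' [E' G']]] := origin_return n rho G.
    exists (t.+1 + N), rho'.
    have W : walk n.+3 (t.+1 + N) = (rho', [::]) by rewrite /walk iterD -/(walk _ _) E.
    split => //; split => //.
    rewrite addSn returns_S W eqxx addn1 ltnS.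
    exact: leq_trans L (returns_mono _ _ _). }
move=> k; have [N [_ [_ [_ L]]]] := P k.+1; by exists N.
Qed.
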